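(* For every $n\ge1$, $Z(G_n)=Z(\widehat{G}_n)=t_n+1$.
   Context: Zero forcing: given a graph and a set $S$ of vertices initially colored black (all others white), repeatedly apply the rule: if a black vertex $v$ has exactly one white neighbor $u$, then $u$ becomes black. $S$ is a zero forcing set if eventually every vertex becomes black. $Z(G)$ is the minimum size of a zero forcing set of $G$. Subdivided $K_4$: the complete graph on 4 vertices $a,b,c,e$ with the edge $ab$ subdivided by a new vertex $s$ (5 vertices, edges $as, sb, ac, ae, bc, be, ce$); $s$ is its subdivision vertex. $B_d$ ($d\ge1$) is the complete binary tree with $2^d-1$ vertices and root $r$. $G_n$ ($n\ge1$): take $B_{2n-1}$ with root $r_n$, and for every leaf $\ell$ of $B_{2n-1}$ attach a new copy of the subdivided $K_4$ by identifying $\ell$ with its subdivision vertex. $\widehat{G}_n$ is obtained from $G_n$ by adding a new vertex $y_n$ adjacent only to $r_n$. $t_1=2$, $t_{n+1}=4t_n+2$ for $n\ge1$. *)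

(* Defs.v *)
From mathcomp Require Import all_boot.
Set Implicit Arguments. Unset Strict Implicit. Unset Printing Implicit Defensive.

(* This equals the (order-independent)
   final derived set of the forcing process. *)
Inductive black (T : finType) (e : rel T) (S : {set T}) : T -> Prop :=
| black_init x : x \in S -> black e S x
| black_force v u : black e S v -> e v u ->
    (forall w, e v w -> w != u -> black e S w) -> black e S u.

Definition zero_forcing (T : finType) (e : rel T) (S : {set T}) : Prop :=
  forall x, black e S x.

Definition is_Z (T : finType) (e : rel T) (k : nat) : Prop :=
  (exists S : {set T}, zero_forcing e S /\ #|S| = k) /\
  (forall S : {set T}, zero_forcing e S -> k <= #|S|).

(* Complete binary tree B_d (d = 2n-1): vertices 'I_(2^d - 1); vertex i has
   heap index i+1, root = 0, children of i are 2i+1 and 2i+2.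
   Leaves are the vertices 2^(d-1) - 1 + k for k < 2^(d-1).
   Gadget for leaf k: vertices (k, t), t : 'I_4, with t = 0,1,2,3 standing for
   a, b, c, e of the subdivided K4; the leaf plays the subdivision vertex s. *)
Definition tree_child (i j : nat) : bool := (j == i.*2.+1) || (j == i.*2.+2).

Definition Gvert (n : nat) : finType :=
  ('I_(2 ^ (2 * n - 1) - 1) + ('I_(2 ^ (2 * n - 2)) * 'I_4))%type.

Definition leaf_of (n : nat) (k : nat) : nat := 2 ^ (2 * n - 2) - 1 + k.

Definition Gadj (n : nat) : rel (Gvert n) := fun x y =>
  match x, y with
  | inl i, inl j => tree_child i j || tree_child j i
  | inl i, inr (k, t) => (val i == leaf_of n k) && (val t < 2)
  | inr (k, t), inl i => (val i == leaf_of n k) && (val t < 2)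
  | inr (k, t), inr (k', t') =>
      [&& k == k', t != t' & ~~ ((val t < 2) && (val t' < 2))]
  end.

(* \hat G_n: add a new vertex y_n = None adjacent only to the root r_n. *)
Definition Ghvert (n : nat) : finType := option (Gvert n).

Definition Ghadj (n : nat) : rel (Ghvert n) := fun x y =>
  match x, y with
  | Some x', Some y' => Gadj x' y'
  | None, Some (inl i) => val i == 0
  | Some (inl i), None => val i == 0
  | _, _ => false
  end.

(* t_1 = 2, t_{n+1} = 4 t_n + 2 (t 0 = 0 is an auxiliary value). *)
Fixpoint t (n : nat) : nat := if n is m.+1 then 4 * t m + 2 else 0.

(* Main.v *)
Require Import Defs.
From mathcomp Require Import all_boot zify.
From Stdlib Require Import Classical.
Set Implicit Arguments. Unset Strict Implicit. Unset Printing Implicit Defensive.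

Lemma closed_black (T : finType) (e : rel T) (S : {set T}) (C : T -> Prop) :
  (forall x, x \in S -> C x) ->
  (forall v u, C v -> e v u -> (forall w, e v w -> w != u -> C w) -> C u) ->
  forall x, black e S x -> C x.
Proof.
move=> HS Hc x; elim => [y Hy|v u _ Hv Hvu _ Hw]; first exact: HS.
exact: Hc Hv Hvu Hw.
Qed.

Lemma black_mono (T : finType) (e : rel T) (S S' : {set T}) :
  S \subset S' -> forall x, black e S x -> black e S' x.
Proof.
move=> sub x; elim => [y Hy|v u _ Hv Hvu _ Hw].
  by apply: black_init; apply: (subsetP sub).
exact: black_force Hv Hvu Hw.
Qed.

Lemma down (U V : finType) (eU : rel U) (eV : rel V) (f : U -> V) (rho : U) (p : V)
  (S : {set V}) (T : {set U}) :
  (forall a b, eV a b = eV b a) -> (forall a b, eU a b = eU b a) ->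
  injective f ->
  (forall u w, eU u w -> eV (f u) (f w)) ->
  (forall u w, eV (f u) w -> (exists w', w = f w' /\ eU u w') \/ (u = rho /\ w = p)) ->
  (forall u, f u \in S -> u \in T) ->
  black eU T rho ->
  forall u, black eV S (f u) -> black eU T u.
Proof.
move=> symV symU injf up nbr sub brho u Hu.
pose C := fun w => forall u, w = f u -> black eU T u.
have: C (f u); last by apply.
apply: (closed_black (C := C)) Hu.
  by move=> w wS u' E; subst w; apply: black_init; apply: sub.
move=> v w Cv evw Cw u' wE; subst w.
rewrite symV in evw.
case: (nbr _ _ evw) => [[v' [vE eu]]|[uE _]]; last by rewrite uE.
subst v.
apply: (black_force (v := v')); first exact: Cv.
  by rewrite symU.
move=> w' ew' ne; apply: (Cw (f w')) => //.
  exact: up.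
by apply/negP => /eqP /injf E; rewrite E eqxx in ne.
Qed.

Lemma lift_up (U V : finType) (eU : rel U) (eV : rel V) (f : U -> V) (rho : U) (p : V)
  (S : {set V}) (T : {set U}) :
  injective f ->
  (forall u w, eU u w -> eV (f u) (f w)) ->
  (forall u w, eV (f u) w -> (exists w', w = f w' /\ eU u w') \/ (u = rho /\ w = p)) ->
  (forall u, u \in T -> black eV S (f u)) -> black eV S p ->
  forall u, black eU T u -> black eV S (f u).
Proof.
move=> injf up nbr HT Hp u; elim => [y Hy|v w _ Hv evw _ Hw]; first exact: HT.
apply: (black_force (v := f v)) => //; first exact: up.
move=> z ez nz.
case: (nbr _ _ ez) => [[w' [zE e']]|[_ ->]] //.
subst z; apply: Hw => //.
by apply/negP => /eqP E; rewrite E eqxx in nz.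
Qed.

Lemma lift_hat (U V : finType) (eU : rel U) (eV : rel V) (eH : rel (option U))
  (f : U -> V) (rho : U) (p : V) (S : {set V}) (T : {set option U}) :
  injective f ->
  (forall a b, eH (Some a) (Some b) = eU a b) ->
  (forall b, eH None (Some b) = (b == rho)) ->
  (forall a, eH (Some a) None = (a == rho)) ->
  eH None None = false ->
  (forall u w, eU u w -> eV (f u) (f w)) ->
  (forall u w, eV (f u) w -> (exists w', w = f w' /\ eU u w') \/ (u = rho /\ w = p)) ->
  eV (f rho) p ->
  None \notin T ->
  (forall u, Some u \in T -> black eV S (f u)) ->
  forall a, black eH T a ->
    match a with Some u => black eV S (f u)
               | None => black eV S p /\ black eV S (f rho) end.
Proof.
move=> injf eSS eNS eSN eNN up nbr erp NT HT a.
elim => [[y|] Hy|v w _ Hv evw _ Hw]; first exact: HT.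
  by rewrite Hy in NT.
case: v Hv evw Hw => [v|] Hv evw Hw; case: w evw Hw => [w|] evw Hw.
- rewrite eSS in evw.
  apply: (black_force (v := f v)) => //; first exact: up.
  move=> z ez nz.
  case: (nbr _ _ ez) => [[w' [zE e']]|[vE ->]].
    subst z; apply: (Hw (Some w')); first by rewrite eSS.
    by apply/negP => /eqP [] E; rewrite E eqxx in nz.
  have := Hw None; rewrite eSN vE eqxx => /(_ isT isT) [].
  done.
- rewrite eSN in evw; move/eqP: evw => vE; subst v.
  have Hp : black eV S p.
    apply: (black_force (v := f rho)) => //.
    move=> z ez nz.
    case: (nbr _ _ ez) => [[w' [zE e']]|[_ zE]]; last by rewrite zE eqxx in nz.
    by subst z; apply: (Hw (Some w')) => //; rewrite eSS.
  by split; [exact: Hp| exact: Hv].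
- rewrite eNS in evw; move/eqP: evw => ->; by case: Hv.
- by rewrite eNN in evw.
Qed.

Definition par (V : Type) (x y : V) (j : 'I_4) : V := if val j < 2 then x else y.

Lemma disj0 (T : finType) (A B : {set T}) :
  (forall s, s \in A -> s \in B -> False) -> A :&: B = set0.
Proof.
move=> H; apply/setP => s; rewrite !inE.
by case sA: (s \in A); case sB: (s \in B) => //; case: (H s).
Qed.

Lemma cardsU_disj (T : finType) (A B : {set T}) :
  (forall s, s \in A -> s \in B -> False) -> #|A :|: B| = #|A| + #|B|.
Proof. by move=> H; rewrite cardsU disj0 // cards0 subn0. Qed.

Definition o0 : 'I_4 := @Ordinal 4 0 isT.
Definition o1 : 'I_4 := @Ordinal 4 1 isT.
Definition o2 : 'I_4 := @Ordinal 4 2 isT.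
Definition o3 : 'I_4 := @Ordinal 4 3 isT.

Lemma ord4_cases (j : 'I_4) : j = o0 \/ j = o1 \/ j = o2 \/ j = o3.
Proof.
case: j => [[|[|[|[|m]]]] Hm].
- by left; apply: val_inj.
- by right; left; apply: val_inj.
- by right; right; left; apply: val_inj.
- by right; right; right; apply: val_inj.
- by [].
Qed.

Definition preS (U V : finType) (emb : 'I_4 -> U -> V) (S : {set V}) j :=
  [set u | emb j u \in S].
Definition topSet (U V : finType) (emb : 'I_4 -> U -> V) (S : {set V}) :=
  [set s in S | [forall j, [forall u, s != emb j u]]].

Lemma count_lemma (U V : finType) (emb : 'I_4 -> U -> V) (S : {set V}) :
  (forall j j' u u', emb j u = emb j' u' -> j = j' /\ u = u') ->
  #|topSet emb S| + #|preS emb S o0| + #|preS emb S o1| + #|preS emb S o2|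
    + #|preS emb S o3| <= #|S|.
Proof.
move=> disj; set pre := preS emb S; set topS := topSet emb S.
have inj j : injective (emb j) by move=> u u' /disj [].
pose I j := [set emb j u | u in pre j].
have cI j : #|I j| = #|pre j| by rewrite card_imset.
have mI j s : s \in I j -> exists2 u, emb j u \in S & s = emb j u.
  by case/imsetP => u; rewrite inE => Hu ->; exists u.
have dI j j' s : j != j' -> s \in I j -> s \in I j' -> False.
  move=> ne /mI [u _ ->] /mI [u' _ /disj [E _]].
  by rewrite E eqxx in ne.
have dT j s : s \in topS -> s \in I j -> False.
  rewrite inE => /andP [_ /forallP /(_ j) /forallP H] /mI [u _ E].
  by have := H u; rewrite E eqxx.
have sub : topS :|: I o0 :|: I o1 :|: I o2 :|: I o3 \subset S.
  apply/subsetP => s; rewrite !in_setU.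
  case/orP => [/orP [/orP [/orP [|]|]|]|].
  - by rewrite inE => /andP [].
  1-4: by case/mI => u Hu ->.
have := subset_leq_card sub.
rewrite !cardsU_disj ?cI //.
- move=> s H1 H2; exact: dT H1 H2.
- move=> s; rewrite !in_setU; case/orP => H1 H2.
  + exact: dT H1 H2.
  + exact: (@dI o0 o1 s isT H1 H2).
- move=> s; rewrite !in_setU; case/orP => [/orP [H1|H1]|H1] H2.
  + exact: dT H1 H2.
  + exact: (@dI o0 o2 s isT H1 H2).
  + exact: (@dI o1 o2 s isT H1 H2).
- move=> s; rewrite !in_setU; case/orP => [/orP [/orP [H1|H1]|H1]|H1] H2.
  + exact: dT H1 H2.
  + exact: (@dI o0 o3 s isT H1 H2).
  + exact: (@dI o1 o3 s isT H1 H2).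
  + exact: (@dI o2 o3 s isT H1 H2).
Qed.

Lemma step_copy (U V : finType) (eU : rel U) (eV : rel V) (f : U -> V) (rho : U) (p : V)
  (T : {set U}) :
  (forall a b, eV a b = eV b a) -> (forall a b, eU a b = eU b a) ->
  injective f ->
  (forall u w, eU u w -> eV (f u) (f w)) ->
  (forall u w, eV (f u) w -> (exists w', w = f w' /\ eU u w') \/ (u = rho /\ w = p)) ->
  forall v u,
  (forall u', v = f u' -> black eU T u') ->
  (forall w, eV v w -> w != f u -> forall u', w = f u' -> black eU T u') ->
  eV v (f u) -> black eU T u \/ (u = rho /\ v = p).
Proof.
move=> symV symU injf up nbr v u Cv Cw evw.
rewrite symV in evw.
case: (nbr _ _ evw) => [[v' [vE eu]]|[uE pE]]; last by right.
subst v; left.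
apply: (black_force (v := v')); first exact: Cv.
  by rewrite symU.
move=> w' ew' ne; apply: (Cw (f w')) => //.
  exact: up.
by apply/negP => /eqP /injf E; rewrite E eqxx in ne.
Qed.

Lemma lower_abs (U V : finType) (eU : rel U) (eV : rel V) (rho : U)
  (emb : 'I_4 -> U -> V) (r x y : V) (k : nat) :
  (forall a b, eV a b = eV b a) -> (forall a b, eU a b = eU b a) ->
  (forall j j' u u', emb j u = emb j' u' -> j = j' /\ u = u') ->
  (forall j u w, eU u w -> eV (emb j u) (emb j w)) ->
  (forall j u w, eV (emb j u) w ->
     (exists w', w = emb j w' /\ eU u w') \/ (u = rho /\ w = par x y j)) ->
  (forall j, eV (par x y j) (emb j rho)) ->
  (forall j u, emb j u <> r /\ emb j u <> x /\ emb j u <> y) ->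
  r <> x -> r <> y -> eV x r -> eV y r ->
  (forall T, zero_forcing eU T -> k <= #|T|) ->
  forall S, zero_forcing eV S -> 4 * k <= #|S| + 1.
Proof.
move=> symV symU disj up nbr epar top rx ry exr eyr Hk S zS.
have inj j : injective (emb j) by move=> u u' /disj [].
set pre := preS emb S.
have Hpre j u : emb j u \in S -> u \in pre j by rewrite inE.
have FA j : k <= #|pre j| + 1.
  have zT : zero_forcing eU (rho |: pre j).
    move=> u; apply: (@down U V eU eV (emb j) rho (par x y j) S) => //.
    - exact: up.
    - exact: nbr.
    - by move=> u' /Hpre H; rewrite in_setU1 H orbT.
    - by apply: black_init; rewrite in_setU1 eqxx.
  have := Hk _ zT; rewrite cardsU1; case: (rho \in pre j) => /=; lia.
pose good j := zero_forcing eU (pre j).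
have FB j : good j -> k <= #|pre j| by move=> g; exact: Hk.
have FC j : ~ good j -> ~ black eU (pre j) rho.
  move=> ng br; apply: ng => u.
  apply: (@down U V eU eV (emb j) rho (par x y j) S) => //.
  - exact: up.
  - exact: nbr.
  - by move=> u' /Hpre.
have stp j v u :
  (forall u', v = emb j u' -> black eU (pre j) u') ->
  (forall w, eV v w -> w != emb j u -> forall u', w = emb j u' -> black eU (pre j) u') ->
  eV v (emb j u) -> black eU (pre j) u \/ (u = rho /\ v = par x y j).
  by apply: step_copy => //; [exact: up | exact: nbr].
have FD a b : a != b -> par x y a = par x y b -> ~ good a -> ~ good b -> False.
  move=> ab pab ga gb.
  pose C w := (forall u, w = emb a u -> black eU (pre a) u) /\
              (forall u, w = emb b u -> black eU (pre b) u).
  have HC : forall w, C w.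
    move=> w; move: (zS w); apply: (closed_black (C := C)).
      move=> s sS; split => u E; subst s; apply: black_init; exact: Hpre.
    have gen c d : par x y c = par x y d -> c != d ->
      forall v u, C v -> eV v (emb c u) ->
      (forall w0, eV v w0 -> w0 != emb c u -> C w0) ->
      (forall u', v = emb c u' -> black eU (pre c) u') ->
      (forall w0, eV v w0 -> w0 != emb c u -> forall u', w0 = emb c u' -> black eU (pre c) u') ->
      (forall w0, C w0 -> forall u', w0 = emb d u' -> black eU (pre d) u') ->
      ~ good d -> black eU (pre c) u.
      move=> pcd cd v u Cv evw Cw Cv' Cw' Cd gd.
      case: (stp c v u Cv' Cw' evw) => // [[uE vE]].
      exfalso; apply: (FC d gd).
      apply: (Cd (emb d rho)) => //.
      apply: Cw; first by rewrite vE pcd.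
      by apply/negP => /eqP /disj [E _]; rewrite E eqxx in cd.
    move=> v w1 Cv evw Cw; split => u E; subst w1.
    - apply: (gen a b pab ab v u Cv evw Cw (proj1 Cv)) => //.
        by move=> w0 e0 n0; apply: (proj1 (Cw w0 e0 n0)).
      by move=> w0 [].
    - apply: (gen b a (esym pab) _ v u Cv evw Cw (proj2 Cv)) => //.
      + by rewrite eq_sym.
      + by move=> w0 e0 n0; apply: (proj2 (Cw w0 e0 n0)).
      + by move=> w0 [].
  apply: ga => u; exact: (proj1 (HC (emb a u)) u).
have FE a b : par x y a = x -> par x y b = y -> ~ good a -> ~ good b ->
    (forall s, s \in S -> exists j u, s = emb j u) -> False.
  move=> pa pb ga gb allS.
  pose C w := [/\ (forall u, w = emb a u -> black eU (pre a) u),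
              (forall u, w = emb b u -> black eU (pre b) u) &
              ((forall j u, w <> emb j u) -> w = x \/ w = y)].
  have HC : forall w, C w.
    move=> w; move: (zS w); apply: (closed_black (C := C)).
      move=> s sS; split.
      - by move=> u E; subst s; apply: black_init; exact: Hpre.
      - by move=> u E; subst s; apply: black_init; exact: Hpre.
      - by case: (allS s sS) => j [u E] H; case: (H j u).
    have gen c q v u : par x y c = q -> C v -> eV v (emb c u) ->
      (forall w0, eV v w0 -> w0 != emb c u -> C w0) ->
      (forall u', v = emb c u' -> black eU (pre c) u') ->
      (forall w0, eV v w0 -> w0 != emb c u -> forall u', w0 = emb c u' -> black eU (pre c) u') ->
      eV q r -> black eU (pre c) u.
      move=> pc Cv evw Cw Cv' Cw' eqr.
      case: (stp c v u Cv' Cw' evw) => // [[uE vE]].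
      exfalso.
      have : C r.
        apply: Cw; first by rewrite vE pc.
        by apply/negP => /eqP E; case: (top c u) => + _; rewrite E.
      case=> _ _ /(_ (fun j u' E => proj1 (top j u') (esym E))) [] //.
    move=> v w1 Cv evw Cw; split.
    - move=> u E; subst w1.
      apply: (gen a x v u pa Cv evw Cw) => //.
        by case: Cv.
      by move=> w0 e0 n0; case: (Cw w0 e0 n0).
    - move=> u E; subst w1.
      apply: (gen b y v u pb Cv evw Cw) => //.
        by case: Cv.
      by move=> w0 e0 n0; case: (Cw w0 e0 n0).
    - move=> nw1.
      case: (classic (exists j u, v = emb j u)) => [[j [u vE]]|nv].
        subst v.
        case: (nbr _ _ _ evw) => [[w' [E _]]|[_ E]]; first by case: (nw1 j w').
        rewrite E /par; case: (val j < 2); tauto.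
      have vxy : v = x \/ v = y.
        case: Cv => _ _; apply => j u E; apply: nv; exists j, u; exact: E.
      exfalso.
      case: vxy => vE; subst v.
      + apply: (FC a ga).
        have := Cw (emb a rho); rewrite -{1}pa => /(_ (epar a)).
        case.
          by apply/negP => /eqP E; case: (nw1 a rho).
        by move=> + _ _; apply.
      + apply: (FC b gb).
        have := Cw (emb b rho); rewrite -{1}pb => /(_ (epar b)).
        case.
          by apply/negP => /eqP E; case: (nw1 b rho).
        by move=> _ + _; apply.
  apply: ga => u; by case: (HC (emb a u)) => + _ _; apply.
have cnt := count_lemma S disj.
set ta := #|topSet emb S| in cnt.
have cross : (~ good o0 \/ ~ good o1) -> (~ good o2 \/ ~ good o3) -> 1 <= ta.
  move=> h1 h2; rewrite lt0n; apply/negP => /eqP /cards0_eq t0.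
  have allS s : s \in S -> exists j u, s = emb j u.
    move=> sS; apply: NNPP => ne.
    have : s \in topSet emb S.
      rewrite inE sS /=; apply/forallP => j; apply/forallP => u.
      by apply/negP => /eqP E; apply: ne; exists j, u.
    by rewrite t0 inE.
  case: h1 => g1; case: h2 => g2.
  - exact: (FE o0 o2).
  - exact: (FE o0 o3).
  - exact: (FE o1 o2).
  - exact: (FE o1 o3).
have h01 : good o0 \/ good o1.
  case: (classic (good o0)) => g0; first by left.
  case: (classic (good o1)) => g1; first by right.
  by case: (FD o0 o1).
have h23 : good o2 \/ good o3.
  case: (classic (good o2)) => g0; first by left.
  case: (classic (good o3)) => g1; first by right.
  by case: (FD o2 o3).
rewrite /pre in FA FB.
have A0 := FA o0; have A1 := FA o1; have A2 := FA o2; have A3 := FA o3.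
case: (classic (good o0)) => g0; case: (classic (good o1)) => g1;
case: (classic (good o2)) => g2; case: (classic (good o3)) => g3;
try (have B0 := FB o0 g0); try (have B1 := FB o1 g1);
try (have B2 := FB o2 g2); try (have B3 := FB o3 g3);
try (have C1 := cross (or_introl g0) (or_introl g2));
try (have C2 := cross (or_introl g0) (or_intror g3));
try (have C3 := cross (or_intror g1) (or_introl g2));
try (have C4 := cross (or_intror g1) (or_intror g3));
try (exfalso; case: h01; [exact: g0 | exact: g1]);
try (exfalso; case: h23; [exact: g2 | exact: g3]); lia.
Qed.

Lemma cardU_le (T : finType) (A B : {set T}) : #|A :|: B| <= #|A| + #|B|.
Proof. rewrite cardsU; lia. Qed.

Definition hatpre (U : finType) (H : {set option U}) : {set U} := [set u | Some u \in H].

Lemma card_hatpre (U : finType) (H : {set option U}) : #|hatpre H| <= #|H|.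
Proof.
have injS : injective (@Some U) by move=> a b [].
rewrite -(card_imset (hatpre H) injS).
apply: subset_leq_card; apply/subsetP => a /imsetP [u]; rewrite inE => Hu ->.
exact: Hu.
Qed.

Record Decomp (U V : finType) (eU : rel U) (eV : rel V) (rho : U)
  (emb : 'I_4 -> U -> V) (r x y : V) : Prop := {
  d_symV : forall a b, eV a b = eV b a;
  d_symU : forall a b, eU a b = eU b a;
  d_disj : forall j j' u u', emb j u = emb j' u' -> j = j' /\ u = u';
  d_up : forall j u w, eU u w -> eV (emb j u) (emb j w);
  d_nbr : forall j u w, eV (emb j u) w ->
     (exists w', w = emb j w' /\ eU u w') \/ (u = rho /\ w = par x y j);
  d_epar : forall j, eV (par x y j) (emb j rho);
  d_top : forall j u, emb j u <> r /\ emb j u <> x /\ emb j u <> y;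
  d_rx : r <> x; d_ry : r <> y;
  d_exr : eV x r; d_eyr : eV y r;
  d_nx : forall w, eV x w -> w = r \/ w = emb o0 rho \/ w = emb o1 rho;
  d_ny : forall w, eV y w -> w = r \/ w = emb o2 rho \/ w = emb o3 rho
}.

Lemma lower_dec (U V : finType) (eU : rel U) (eV : rel V) (rho : U) (emb : 'I_4 -> U -> V) (r x y : V) k :
  @Decomp U V eU eV rho emb r x y ->
  (forall T, zero_forcing eU T -> k <= #|T|) ->
  forall S, zero_forcing eV S -> 4 * k <= #|S| + 1.
Proof.
case=> *; apply: (@lower_abs U V eU eV rho emb r x y) => //.
Qed.

Section Up.
Lemma copies_black (U V : finType) (eU : rel U) (eV : rel V) (eH : rel (option U)) (rho : U) (emb : 'I_4 -> U -> V) (r x y : V)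
   (S : {set V}) (R : {set U}) (H : {set option U}) :
  @Decomp U V eU eV rho emb r x y ->
  (forall a b, eH (Some a) (Some b) = eU a b) ->
  (forall b, eH None (Some b) = (b == rho)) ->
  (forall a, eH (Some a) None = (a == rho)) ->
  eH None None = false ->
  zero_forcing eU R -> zero_forcing eH H -> None \notin H ->
  (forall j, val j \in [:: 1; 3] -> forall u, u \in hatpre H -> emb j u \in S) ->
  (forall j, val j \in [:: 1; 3] -> black eV S (par x y j) /\ forall u, black eV S (emb j u)).
Proof.
move=> D eSS eNS eSN eNN zR zH NH HS j jodd.
have inj : injective (emb j) by move=> u u' /(d_disj D) [].
have L := @lift_hat U V eU eV eH (emb j) rho (par x y j) S H inj eSS eNS eSN eNN
  (@d_up _ _ _ _ _ _ _ _ _ D j) (@d_nbr _ _ _ _ _ _ _ _ _ D j).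
have e1 : eV (emb j rho) (par x y j) by rewrite (d_symV D) (d_epar D).
have NHp := L e1 NH.
have HSb : forall u, Some u \in H -> black eV S (emb j u).
  by move=> u Hu; apply: black_init; apply: HS => //; rewrite inE.
split; first by case: (NHp HSb None (zH None)).
by move=> u; exact: (NHp HSb (Some u) (zH (Some u))).
Qed.

Lemma copy_R (U V : finType) (eU : rel U) (eV : rel V) (rho : U) (emb : 'I_4 -> U -> V) (r x y : V)
   (S : {set V}) (R : {set U}) j :
  @Decomp U V eU eV rho emb r x y ->
  zero_forcing eU R -> rho \in R ->
  (forall u, u \in R -> u != rho -> emb j u \in S) ->
  black eV S (emb j rho) -> black eV S (par x y j) ->
  forall u, black eV S (emb j u).
Proof.
move=> D zR rR HS br bp u.
have inj : injective (emb j) by move=> a b /(d_disj D) [].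
apply: (lift_up (f := emb j) (rho := rho) (p := par x y j) (T := R)) => //.
- exact: (d_up D).
- exact: (d_nbr D).
move=> a aR; case: (eqVneq a rho) => [->//|na].
by apply: black_init; apply: HS.
Qed.
End Up.

Definition S1 (U V : finType) (emb : 'I_4 -> U -> V) (r : V) (rho : U) (R : {set U})
  (H : {set option U}) : {set V} :=
  r |: (emb o0 @: (R :\ rho) :|: emb o1 @: hatpre H :|: emb o2 @: (R :\ rho)
        :|: emb o3 @: hatpre H).

Definition S2 (U V : finType) (emb : 'I_4 -> U -> V) (rho : U) (R : {set U})
  (H : {set option U}) : {set V} :=
  emb o0 @: R :|: emb o1 @: hatpre H :|: emb o2 @: (R :\ rho) :|: emb o3 @: hatpre H.

Lemma ord13 (j : 'I_4) : val j \in [:: 1; 3] -> j = o1 \/ j = o3.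
Proof. by case: (ord4_cases j) => [->|[->|[->|->]]]; auto. Qed.

Lemma upper_G (U V : finType) (eU : rel U) (eV : rel V) (eH : rel (option U)) (rho : U)
  (emb : 'I_4 -> U -> V) (r x y : V) (R : {set U}) (H : {set option U}) :
  @Decomp U V eU eV rho emb r x y ->
  (forall v, [\/ v = r, v = x, v = y | exists j u, v = emb j u]) ->
  (forall a b, eH (Some a) (Some b) = eU a b) ->
  (forall b, eH None (Some b) = (b == rho)) ->
  (forall a, eH (Some a) None = (a == rho)) ->
  eH None None = false ->
  zero_forcing eU R -> rho \in R -> zero_forcing eH H -> None \notin H ->
  [/\ zero_forcing eV (S1 emb r rho R H),
      #|S1 emb r rho R H| <= 1 + 2 * (#|R| - 1) + 2 * #|H| &
      r \in S1 emb r rho R H].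
Proof.
move=> D cov eSS eNS eSN eNN zR rR zH NH.
set S := S1 emb r rho R H.
have inS j u (A : {set U}) : emb j u \in emb j @: A -> emb j u \in S -> True by [].
have hs : forall j, val j \in [:: 1; 3] -> forall u, u \in hatpre H -> emb j u \in S.
  move=> j /ord13 [->|->] u Hu; rewrite /S /S1 !inE ?(imset_f _ Hu) ?orbT //.
have CB := @copies_black U V eU eV eH rho emb r x y S R H D eSS eNS eSN eNN zR zH NH hs.
have [bx b1] := CB o1 isT.
have [by3 b3] := CB o3 isT.
rewrite /par /= in bx by3.
have rS : r \in S by rewrite /S /S1 !inE eqxx.
have hr j : j = o0 \/ j = o2 -> forall u, u \in R -> u != rho -> emb j u \in S.
  move=> [->|->] u uR nu; rewrite /S /S1 !inE; have uR' : u \in R :\ rho by rewrite !inE nu uR.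
  - by rewrite (imset_f _ uR') !orbT.
  - by rewrite (imset_f _ uR') !orbT.
have b0r : black eV S (emb o0 rho).
  apply: (black_force (v := x)) => //; first exact: (d_epar D o0).
  move=> w ew nw; case: (d_nx D ew) => [->|[E|->]] //; first exact: black_init.
  by rewrite E eqxx in nw.
have b2r : black eV S (emb o2 rho).
  apply: (black_force (v := y)) => //; first exact: (d_epar D o2).
  move=> w ew nw; case: (d_ny D ew) => [->|[E|->]] //; first exact: black_init.
  by rewrite E eqxx in nw.
have b0 := copy_R D zR rR (hr o0 (or_introl erefl)) b0r bx.
have b2 := copy_R D zR rR (hr o2 (or_intror erefl)) b2r by3.
split => //.
- move=> v; case: (cov v) => [->|->|->|[j [u ->]]] //; first exact: black_init.
  by case: (ord4_cases j) => [->|[->|[->|->]]].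
- rewrite /S /S1.
  have c1 := leq_imset_card (emb o0) (R :\ rho).
  have c2 := leq_imset_card (emb o1) (hatpre H).
  have c3 := leq_imset_card (emb o2) (R :\ rho).
  have c4 := leq_imset_card (emb o3) (hatpre H).
  have c5 := card_hatpre H.
  have c6 : #|R| = 1 + #|R :\ rho| by rewrite (cardsD1 rho R) rR.
  set X0 := emb o0 @: (R :\ rho); set X1 := emb o1 @: hatpre H.
  set X2 := emb o2 @: (R :\ rho); set X3 := emb o3 @: hatpre H.
  rewrite cardsU1.
  have u1 := cardU_le (X0 :|: X1 :|: X2) X3.
  have u2 := cardU_le (X0 :|: X1) X2.
  have u3 := cardU_le X0 X1.
  have b : (r \notin X0 :|: X1 :|: X2 :|: X3) <= 1 by case: (_ \notin _).
  subst X0 X1 X2 X3; lia.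
Qed.

Lemma upper_H (U V : finType) (eU : rel U) (eV : rel V) (eH : rel (option U)) (rho : U)
  (emb : 'I_4 -> U -> V) (r x y z : V) (R : {set U}) (H : {set option U}) :
  @Decomp U V eU eV rho emb r x y ->
  (forall v, [\/ v = r, v = x, v = y | v = z \/ exists j u, v = emb j u]) ->
  (forall w, eV r w -> [\/ w = x, w = y | w = z]) ->
  eV r z -> (forall j u, emb j u <> z) ->
  (forall a b, eH (Some a) (Some b) = eU a b) ->
  (forall b, eH None (Some b) = (b == rho)) ->
  (forall a, eH (Some a) None = (a == rho)) ->
  eH None None = false ->
  zero_forcing eU R -> rho \in R -> zero_forcing eH H -> None \notin H ->
  [/\ zero_forcing eV (S2 emb rho R H),
      #|S2 emb rho R H| <= #|R| + 2 * #|H| + (#|R| - 1) &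
      z \notin S2 emb rho R H].
Proof.
move=> D cov nr erz zn eSS eNS eSN eNN zR rR zH NH.
set S := S2 emb rho R H.
have hs : forall j, val j \in [:: 1; 3] -> forall u, u \in hatpre H -> emb j u \in S.
  move=> j /ord13 [->|->] u Hu; rewrite /S /S2 !inE ?(imset_f _ Hu) ?orbT //.
have CB := @copies_black U V eU eV eH rho emb r x y S R H D eSS eNS eSN eNN zR zH NH hs.
have [bx b1] := CB o1 isT.
have [by3 b3] := CB o3 isT.
rewrite /par /= in bx by3.
have h0 : forall u, u \in R -> u != rho -> emb o0 u \in S.
  by move=> u uR _; rewrite /S /S2 !inE (imset_f _ uR).
have h2 : forall u, u \in R -> u != rho -> emb o2 u \in S.
  move=> u uR nu; have uR' : u \in R :\ rho by rewrite !inE nu uR.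
  by rewrite /S /S2 !inE (imset_f _ uR') !orbT.
have b0r : black eV S (emb o0 rho) by apply: black_init; rewrite /S /S2 !inE (imset_f _ rR).
have b0 := copy_R D zR rR h0 b0r bx.
have br : black eV S r.
  apply: (black_force (v := x)) => //; first exact: (d_exr D).
  move=> w ew nw; case: (d_nx D ew) => [E|[->|->]] //.
  by rewrite E eqxx in nw.
have bz : black eV S z.
  apply: (black_force (v := r)) => //.
  move=> w ew nw; case: (nr _ ew) => [->|->|E] //.
  by rewrite E eqxx in nw.
have b2r : black eV S (emb o2 rho).
  apply: (black_force (v := y)) => //; first exact: (d_epar D o2).
  move=> w ew nw; case: (d_ny D ew) => [->|[E|->]] //.
  by rewrite E eqxx in nw.
have b2 := copy_R D zR rR h2 b2r by3.
split => //.
- move=> v; case: (cov v) => [->|->|->|[->|[j [u ->]]]] //.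
  by case: (ord4_cases j) => [->|[->|[->|->]]].
- rewrite /S /S2.
  have c1 := leq_imset_card (emb o0) R.
  have c2 := leq_imset_card (emb o1) (hatpre H).
  have c3 := leq_imset_card (emb o2) (R :\ rho).
  have c4 := leq_imset_card (emb o3) (hatpre H).
  have c5 := card_hatpre H.
  have c6 : #|R| = 1 + #|R :\ rho| by rewrite (cardsD1 rho R) rR.
  have u1 := cardU_le (emb o0 @: R :|: emb o1 @: hatpre H :|: emb o2 @: (R :\ rho)) (emb o3 @: hatpre H).
  have u2 := cardU_le (emb o0 @: R :|: emb o1 @: hatpre H) (emb o2 @: (R :\ rho)).
  have u3 := cardU_le (emb o0 @: R) (emb o1 @: hatpre H).
  lia.
- rewrite /S /S2 !inE; apply/negP.
  by case/orP => [/orP [/orP [|]|]|] /imsetP [u _ E]; case: (zn _ _ (esym E)).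
Qed.

Definition P (n : nat) := 2 ^ (2 * n).

Lemma P_gt0 n : 0 < P n. Proof. by rewrite /P expn_gt0. Qed.

Lemma E1 n : 2 ^ (2 * n.+1 - 1) = 2 * P n.
Proof. by rewrite /P (_ : 2 * n.+1 - 1 = (2 * n).+1) ?expnS //; lia. Qed.
Lemma E2 n : 2 ^ (2 * n.+1 - 2) = P n.
Proof. by rewrite /P (_ : 2 * n.+1 - 2 = 2 * n) //; lia. Qed.
Lemma E3 n : 2 ^ (2 * n.+2 - 1) = 8 * P n.
Proof. by rewrite /P (_ : 2 * n.+2 - 1 = (2 * n).+3) ?expnS ?mulnA //; lia. Qed.
Lemma E4 n : 2 ^ (2 * n.+2 - 2) = 4 * P n.
Proof. by rewrite /P (_ : 2 * n.+2 - 2 = (2 * n).+2) ?expnS ?mulnA //; lia. Qed.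

Lemma tl_eq k m : 2 ^ k <= m < 2 ^ k.+1 -> trunc_log 2 m = k.
Proof.
case/andP => h1 h2; apply/eqP; rewrite eqn_leq trunc_log_max // andbT.
have m0 : 0 < m by apply: leq_trans h1; rewrite expn_gt0.
have := trunc_logP (isT : 1 < 2) m0.
move=> h3; have h4 := leq_ltn_trans h3 h2.
by rewrite ltn_exp2l in h4.
Qed.

Definition dep (i : nat) := trunc_log 2 i.+1.

Lemma depP i : 2 ^ dep i <= i.+1 < 2 ^ (dep i).+1.
Proof.
rewrite /dep; apply/andP; split.
  exact: trunc_logP.
exact: trunc_log_ltn.
Qed.

Lemma dep_le i k : i.+1 < 2 ^ k.+1 -> dep i <= k.
Proof.
move=> h; have := depP i => /andP [h1 _].
have := leq_ltn_trans h1 h; by rewrite ltn_exp2l.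
Qed.

Lemma dep_child i c : c < 2 -> dep (i.*2 + c).+1 = (dep i).+1.
Proof.
move=> c2; apply: tl_eq; have := depP i => /andP [h1 h2].
rewrite expnS in h2; rewrite !expnS; apply/andP; split; lia.
Qed.

Definition F (j : nat) (i : nat) := i + (3 + j) * 2 ^ dep i.

Lemma depF j i : j < 4 -> dep (F j i) = (dep i).+2.
Proof.
move=> j4; apply: tl_eq; have := depP i => /andP [h1 h2].
rewrite /F !expnS; set p := 2 ^ dep i in h1 h2 *.
rewrite expnS in h2.
apply/andP; split; nia.
Qed.

Lemma F_child j i c : c < 2 -> F j (i.*2 + c).+1 = (F j i).*2 + c.+1.
Proof.
move=> c2; rewrite /F dep_child // expnS; lia.
Qed.

Lemma F_inj j j' i i' : j < 4 -> j' < 4 -> F j i = F j' i' -> j = j' /\ i = i'.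
Proof.
move=> j4 j'4 E.
have dE : dep i = dep i'.
  have := depF i j4; have := depF i' j'4; rewrite E => -> []; done.
move: E; rewrite /F -dE.
have := depP i; have := depP i'; rewrite -dE expnS.
set p := 2 ^ dep i => /andP [h1 h2] /andP [h3 h4].
move: j4 j'4; case: j => [|[|[|[|j]]]] //; case: j' => [|[|[|[|j']]]] // _ _ E; lia.
Qed.

Lemma F_ge3 j i : 3 <= F j i.
Proof. rewrite /F; have : 0 < 2 ^ dep i by rewrite expn_gt0. nia. Qed.

Lemma dep_leP n i : i.+1 < 2 * P n -> 2 ^ dep i <= P n.
Proof.
move=> h; rewrite /P; apply: leq_pexp2l => //.
apply: dep_le; by rewrite expnS.
Qed.

Lemma F_lt n j i : j < 4 -> i.+1 < 2 * P n -> (F j i).+1 < 8 * P n.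
Proof.
move=> j4 h; have := dep_leP h; have := depP i; rewrite /F expnS.
set p := 2 ^ dep i => /andP [h1 h2] h3; nia.
Qed.

Lemma dep_leaf n k : k < P n -> dep (P n - 1 + k) = 2 * n.
Proof.
move=> kP; apply: tl_eq; have := P_gt0 n; rewrite /P in kP * => h.
rewrite expnS; lia.
Qed.

Lemma F_leaf n j k : k < P n -> F j (P n - 1 + k) = 4 * P n - 1 + (j * P n + k).
Proof.
move=> kP; rewrite /F dep_leaf //; have := P_gt0 n; rewrite -/(P n); nia.
Qed.

Lemma F_leaf_inv n j i k' : j < 4 -> i.+1 < 2 * P n -> F j i = 4 * P n - 1 + k' ->
  exists k, [/\ k < P n, i = P n - 1 + k & k' = j * P n + k].
Proof.
move=> j4 h E.
have dl := dep_leP h.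
have dP : 2 ^ dep i = P n.
  have lt : P n < 2 ^ (dep i).+1.
    have := depP i; move: E; rewrite /F expnS; set p := 2 ^ dep i => E /andP [h1 h2].
    have := P_gt0 n; nia.
  move: dl lt; rewrite /P leq_exp2l // ltn_exp2l // => a b.
  by rewrite (_ : dep i = 2 * n) //; lia.
exists (i.+1 - P n); move: E; rewrite /F dP; have := depP i; rewrite dP expnS.
move=> /andP [h1 h2] E; split; nia.
Qed.

Lemma F_0 j : F j 0 = 3 + j.
Proof. by rewrite /F /dep trunc_log1 expn0 muln1. Qed.

Lemma F_cover n m : 3 <= m -> m.+1 < 8 * P n ->
  exists j i, [/\ j < 4, i.+1 < 2 * P n & m = F j i].
Proof.
move=> m3 mlt.
pose D := trunc_log 2 m.+1.
have D2 : 2 <= D by apply: trunc_log_max.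
have hD1 : 2 ^ D <= m.+1 by apply: trunc_logP.
have hD2 : m.+1 < 2 ^ D.+1 by apply: trunc_log_ltn.
pose d := D - 2.
have Dd : D = d.+2 by rewrite /d; lia.
rewrite Dd !expnS in hD1 hD2.
have dle : 2 ^ d <= P n.
  rewrite /P; apply: leq_pexp2l => //.
  have : 2 ^ D < 2 ^ (2 * n).+3.
    apply: (leq_ltn_trans (trunc_logP _ _)) => //.
    apply: (leq_trans mlt); by rewrite !expnS -/(P n); lia.
  rewrite ltn_exp2l //; lia.
set p := 2 ^ d in hD1 hD2 dle.
have hj : exists j, j < 4 /\ (4 + j) * p <= m.+1 < (5 + j) * p.
  case: (ltnP m.+1 (5 * p)) => h5; first by exists 0; split => //; apply/andP; lia.
  case: (ltnP m.+1 (6 * p)) => h6; first by exists 1; split => //; apply/andP; lia.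
  case: (ltnP m.+1 (7 * p)) => h7; first by exists 2; split => //; apply/andP; lia.
  by exists 3; split => //; apply/andP; lia.
case: hj => j [j4 /andP [hj1 hj2]].
exists j, (m - (3 + j) * p).
have di : dep (m - (3 + j) * p) = d.
  apply: tl_eq; rewrite -/p expnS; apply/andP; split; nia.
split => //.
- rewrite -/(P n); nia.
- rewrite /F di -/p; nia.
Qed.

Lemma F_lt_inv n j i : j < 4 -> (F j i).+1 < 8 * P n -> i.+1 < 2 * P n.
Proof.
move=> j4 h.
have := depP i; rewrite expnS => /andP [h1 h2].
have lt : 2 ^ dep i < 2 ^ (2 * n).+1.
  rewrite expnS -/(P n); move: h; rewrite /F; nia.
rewrite ltn_exp2l // in lt.
have : 2 ^ (dep i).+1 <= 2 ^ (2 * n).+1 by rewrite leq_exp2l.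
rewrite !expnS -/(P n); lia.
Qed.

Lemma Gadj_sym n a b : Gadj (n := n) a b = Gadj (n := n) b a.
Proof.
case: a => [i|[k t]]; case: b => [i'|[k' t']]; rewrite /Gadj //=.
- exact: orbC.
- by rewrite [k' == k]eq_sym [t' == t]eq_sym [(t' < 2) && _]andbC.
Qed.

Lemma tl1 n (i : 'I_(2 ^ (2 * n.+1 - 1) - 1)) : i.+1 < 2 * P n.
Proof. have := ltn_ord i; have := E1 n; have := P_gt0 n; lia. Qed.
Lemma tl2 n (i : 'I_(2 ^ (2 * n.+2 - 1) - 1)) : i.+1 < 8 * P n.
Proof. have := ltn_ord i; have := E3 n; have := P_gt0 n; lia. Qed.
Lemma ll1 n (k : 'I_(2 ^ (2 * n.+1 - 2))) : k < P n.
Proof. have := ltn_ord k; have := E2 n; lia. Qed.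
Lemma ll2 n (k : 'I_(2 ^ (2 * n.+2 - 2))) : k < 4 * P n.
Proof. have := ltn_ord k; have := E4 n; lia. Qed.

Lemma mkT1_lt n i : i.+1 < 2 * P n -> i < 2 ^ (2 * n.+1 - 1) - 1.
Proof. rewrite E1; lia. Qed.
Lemma mkT2_lt n i : i.+1 < 8 * P n -> i < 2 ^ (2 * n.+2 - 1) - 1.
Proof. rewrite E3; lia. Qed.
Lemma mkL1_lt n k : k < P n -> k < 2 ^ (2 * n.+1 - 2).
Proof. by rewrite E2. Qed.
Lemma mkL2_lt n k : k < 4 * P n -> k < 2 ^ (2 * n.+2 - 2).
Proof. by rewrite E4. Qed.

Lemma leaf1 n k : leaf_of n.+1 k = P n - 1 + k.
Proof. by rewrite /leaf_of E2. Qed.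
Lemma leaf2 n k : leaf_of n.+2 k = 4 * P n - 1 + k.
Proof. by rewrite /leaf_of E4. Qed.

Lemma embT_lt n (j : 'I_4) (i : 'I_(2 ^ (2 * n.+1 - 1) - 1)) :
  F j i < 2 ^ (2 * n.+2 - 1) - 1.
Proof. apply: mkT2_lt; apply: F_lt => //; exact: tl1. Qed.

Lemma embL_lt n (j : 'I_4) (k : 'I_(2 ^ (2 * n.+1 - 2))) :
  j * P n + k < 2 ^ (2 * n.+2 - 2).
Proof. apply: mkL2_lt; have := ll1 k; have := ltn_ord j; nia. Qed.

Definition embT n (j : 'I_4) (i : 'I_(2 ^ (2 * n.+1 - 1) - 1)) :
  'I_(2 ^ (2 * n.+2 - 1) - 1) := Ordinal (embT_lt j i).
Definition embL n (j : 'I_4) (k : 'I_(2 ^ (2 * n.+1 - 2))) :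
  'I_(2 ^ (2 * n.+2 - 2)) := Ordinal (embL_lt j k).

Definition emb n (j : 'I_4) (u : Gvert n.+1) : Gvert n.+2 :=
  match u with
  | inl i => inl (embT j i)
  | inr (k, t) => inr (embL j k, t)
  end.

Lemma inl_eqE (A B : eqType) (a b : A) : (@inl A B a == inl b) = (a == b).
Proof. by []. Qed.
Lemma inr_eqE (A B : eqType) (a b : B) : (@inr A B a == inr b) = (a == b).
Proof. by []. Qed.

Lemma tc_F j i i' : tree_child i i' -> tree_child (F j i) (F j i').
Proof.
rewrite /tree_child => /orP [] /eqP ->.
- have h := @F_child j i 0 isT; rewrite addn0 in h.
  by rewrite h; apply/orP; left; apply/eqP; lia.
- have h := @F_child j i 1 isT.
  rewrite (_ : (i.*2).+2 = (i.*2 + 1).+1); last by lia.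
  by rewrite h; apply/orP; right; apply/eqP; lia.
Qed.

Lemma rt_lt n : 0 < 2 ^ (2 * n.+1 - 1) - 1.
Proof. apply: mkT1_lt; have := P_gt0 n; lia. Qed.
Definition rootv n : Gvert n.+1 := inl (Ordinal (rt_lt n)).
Lemma x_lt n : 1 < 2 ^ (2 * n.+2 - 1) - 1.
Proof. apply: mkT2_lt; have := P_gt0 n; lia. Qed.
Lemma y_lt n : 2 < 2 ^ (2 * n.+2 - 1) - 1.
Proof. apply: mkT2_lt; have := P_gt0 n; lia. Qed.
Definition xv n : Gvert n.+2 := inl (Ordinal (x_lt n)).
Definition yv n : Gvert n.+2 := inl (Ordinal (y_lt n)).

Lemma emb_up n (j : 'I_4) (u w : Gvert n.+1) :
  Gadj u w -> Gadj (emb j u) (emb j w).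
Proof.
case: u => [i|[k t]]; case: w => [i'|[k' t']]; rewrite /Gadj /=.
- by case/orP => h; apply/orP; [left|right]; apply: tc_F.
- case/andP => /eqP h ->; rewrite andbT leaf2 h leaf1 F_leaf //; exact: ll1.
- case/andP => /eqP h ->; rewrite andbT leaf2 h leaf1 F_leaf //; exact: ll1.
- case/and3P => /eqP -> -> ->; by rewrite eqxx.
Qed.

Lemma emb_disj n (j j' : 'I_4) (u u' : Gvert n.+1) :
  emb j u = emb j' u' -> j = j' /\ u = u'.
Proof.
case: u => [i|[k t]]; case: u' => [i'|[k' t']] //=.
- case=> /F_inj [] // E1' E2'.
  by split; [exact: val_inj | congr inl; exact: val_inj].
- case=> E ->.
  have := ll1 k; have := ll1 k'; have := ltn_ord j; have := ltn_ord j'.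
  case: j E => [j jl] /=; case: j' => [j' jl'] /= E h1 h2 h3 h4.
  have ej : j = j'.
    move: jl jl' h1 h2 E; case: j => [|[|[|[|]]]] //; case: j' => [|[|[|[|]]]] // *; lia.
  subst j'; split; first by apply/eqP; rewrite -val_eqE /=; apply/eqP.
  congr (inr (_, _)); apply/eqP; rewrite -val_eqE /=; apply/eqP => /=; lia.
Qed.

Lemma emb_nbr n (j : 'I_4) (u : Gvert n.+1) (w : Gvert n.+2) :
  Gadj (emb j u) w ->
  (exists w', w = emb j w' /\ Gadj u w') \/ (u = rootv n /\ w = par (xv n) (yv n) j).
Proof.
have j4 := ltn_ord j.
case: u => [i|[k t]]; case: w => [m|[k' t']]; rewrite /Gadj /=.
- case/orP => h.
  +
    have [c [c2 mE]] : exists c, c < 2 /\ (m : nat) = (F j i).*2 + c.+1.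
      move: h; rewrite /tree_child => /orP [] /eqP ->; [exists 0 | exists 1]; split => //; lia.
    have Fi' : F j (i.*2 + c).+1 = m by rewrite F_child // mE.
    have hi' : (i.*2 + c).+2 < 2 * P n.
      apply: (F_lt_inv (j := j)) => //; rewrite Fi'; exact: tl2.
    left; exists (inl (Ordinal (mkT1_lt hi'))); split.
      by congr inl; apply/eqP; rewrite -val_eqE /=; apply/eqP; rewrite /= Fi'.
    rewrite /Gadj /= /tree_child; apply/orP; left; apply/orP.
    by move: c2; case: c {mE Fi' hi'} => [|[|c]] // _; [left|right]; apply/eqP; lia.
  +
    have [c [c2 mE]] : exists c, c < 2 /\ F j i = (m : nat).*2 + c.+1.
      move: h; rewrite /tree_child => /orP [] /eqP ->; [exists 0 | exists 1]; split => //; lia.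
    case: (posnP i) => [i0|ipos].
    * right; split.
        by rewrite /rootv; f_equal; apply/eqP; rewrite -val_eqE /=; apply/eqP; rewrite /= i0.
      move: mE; rewrite i0 F_0 /par /xv /yv; case: j {j4 h} => jj jl /=.
      move: c2 jl; case: jj => [|[|[|[|jj]]]] //; case: c => [|[|cc]] // _ _ E;
        rewrite /=; f_equal; apply/eqP; rewrite -val_eqE /=; apply/eqP => /=; lia.
    * have [q [c' [c'2 iE]]] : exists q c', c' < 2 /\ (i : nat) = (q.*2 + c').+1.
        exists (i.-1)./2, (odd i.-1); split; first by case: odd.
        by rewrite -[(i.-1)./2.*2 + _]addnC odd_double_half prednK.
      have Fq : F j i = (F j q).*2 + c'.+1 by rewrite iE F_child.
      have mq : (m : nat) = F j q by lia.
      have hq : q.+1 < 2 * P n by have := tl1 i; lia.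
      left; exists (inl (Ordinal (mkT1_lt hq))); split.
        by congr inl; apply/eqP; rewrite -val_eqE /=; apply/eqP; rewrite /= mq.
      rewrite /Gadj /= /tree_child; apply/orP; right; apply/orP.
      by move: c'2; case: c' iE {Fq} => [|[|cc]] // iE _; [left|right]; apply/eqP; lia.
- case/andP => /eqP h tt.
  have [k [kP iE kE]] := F_leaf_inv j4 (tl1 i) (etrans h (leaf2 n k')).
  left; exists (inr (Ordinal (mkL1_lt kP), t')); split.
    by congr (inr (_, _)); apply/eqP; rewrite -val_eqE /=; apply/eqP; rewrite /= kE.
  by rewrite /Gadj /= tt andbT leaf1 iE.
- case/andP => /eqP h tt.
  have kP := ll1 k.
  have hl : (P n - 1 + k).+1 < 2 * P n by lia.
  left; exists (inl (Ordinal (mkT1_lt hl))); split.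
    by congr inl; apply/eqP; rewrite -val_eqE /=; apply/eqP; rewrite /= h leaf2 F_leaf.
  by rewrite /Gadj /= tt andbT leaf1.
- case/and3P => /eqP h nt tt.
  left; exists (inr (k, t')); split.
    by congr (inr (_, _)); apply/eqP; rewrite -val_eqE /=; apply/eqP; rewrite /= -h.
  by rewrite /Gadj /= eqxx nt tt.
Qed.


Lemma emb_rho_val n (j : 'I_4) : emb j (rootv n) = inl (Ordinal (embT_lt j (Ordinal (rt_lt n)))).
Proof. by []. Qed.

Lemma epar_G n (j : 'I_4) : Gadj (par (xv n) (yv n) j) (emb j (rootv n)).
Proof.
rewrite /Gadj /par /= /tree_child F_0.
by case: j => [[|[|[|[|jj]]]] jl].
Qed.

Lemma top_G n (j : 'I_4) (u : Gvert n.+1) :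
  emb j u <> rootv n.+1 /\ emb j u <> xv n /\ emb j u <> yv n.
Proof.
case: u => [i|[k t]] //=.
have := F_ge3 j i.
by split; [|split] => -[] /= E; move: E; lia.
Qed.

Lemma exr_G n : Gadj (xv n) (rootv n.+1). Proof. by []. Qed.
Lemma eyr_G n : Gadj (yv n) (rootv n.+1). Proof. by []. Qed.

Lemma leaf2_big n k : 3 <= leaf_of n.+2 k.
Proof. rewrite leaf2; have := P_gt0 n; lia. Qed.

Lemma nx_G n (w : Gvert n.+2) : Gadj (xv n) w ->
  w = rootv n.+1 \/ w = emb o0 (rootv n) \/ w = emb o1 (rootv n).
Proof.
case: w => [m|[k t]]; rewrite /Gadj /=.
- rewrite /tree_child /= => h.
  have : (m : nat) = 0 \/ (m : nat) = 3 \/ (m : nat) = 4.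
    move: h; case: (m : nat) => [|[|[|[|[|mm]]]]] //; auto.
  case=> [E|[E|E]]; [left|right; left|right; right];
    rewrite /rootv; f_equal; apply/eqP; rewrite -val_eqE /=; apply/eqP; rewrite ?F_0 E //.
- by case/andP => /eqP E _; have := leaf2_big n k; rewrite -E.
Qed.

Lemma ny_G n (w : Gvert n.+2) : Gadj (yv n) w ->
  w = rootv n.+1 \/ w = emb o2 (rootv n) \/ w = emb o3 (rootv n).
Proof.
case: w => [m|[k t]]; rewrite /Gadj /=.
- rewrite /tree_child /= => h.
  have : (m : nat) = 0 \/ (m : nat) = 5 \/ (m : nat) = 6.
    move: h; case: (m : nat) => [|[|[|[|[|[|[|mm]]]]]]] //; auto.
  case=> [E|[E|E]]; [left|right; left|right; right];
    rewrite /rootv; f_equal; apply/eqP; rewrite -val_eqE /=; apply/eqP; rewrite ?F_0 E //.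
- by case/andP => /eqP E _; have := leaf2_big n k; rewrite -E.
Qed.

Lemma cover_G n (v : Gvert n.+2) :
  [\/ v = rootv n.+1, v = xv n, v = yv n | exists j u, v = emb j u].
Proof.
case: v => [m|[k t]].
- case: (ltnP m 3) => m3.
    move: m3; case: m => [[|[|[|mm]]] Hm] // _.
    + by apply: Or41; apply/eqP.
    + by apply: Or42; apply/eqP.
    + by apply: Or43; apply/eqP.
  have [j [i [j4 hi E]]] := F_cover m3 (tl2 m).
  apply: Or44; exists (Ordinal j4), (inl (Ordinal (mkT1_lt hi))).
  by apply/eqP; rewrite inl_eqE -val_eqE /= E.
- have kl := ll2 k; have P0 := P_gt0 n.
  have j4 : k %/ P n < 4 by rewrite ltn_divLR.
  have kP : k %% P n < P n by rewrite ltn_pmod.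
  apply: Or44; exists (Ordinal j4), (inr (Ordinal (mkL1_lt kP), t)).
  apply/eqP; rewrite /= inr_eqE xpair_eqE eqxx andbT -val_eqE /=.
  by rewrite {1}(divn_eq k (P n)).
Qed.

Lemma DG n : Decomp (Gadj (n := n.+1)) (Gadj (n := n.+2)) (rootv n) (@emb n)
  (rootv n.+1) (xv n) (yv n).
Proof.
split.
- exact: Gadj_sym.
- exact: Gadj_sym.
- exact: emb_disj.
- exact: emb_up.
- exact: emb_nbr.
- exact: epar_G.
- exact: top_G.
- by [].
- by [].
- exact: exr_G.
- exact: eyr_G.
- exact: nx_G.
- exact: ny_G.
Qed.

Lemma Ghadj_sym n a b : Ghadj (n := n) a b = Ghadj (n := n) b a.
Proof.
case: a => [a|]; case: b => [b|]; rewrite /Ghadj //.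
- by move: (Gadj_sym (n:=n) a b); case: a => [?|[??]]; case: b => [?|[??]].
Qed.

Lemma Ghadj_SS n (a b : Gvert n) : Ghadj (Some a) (Some b) = Gadj a b.
Proof. by case: a => [?|[??]]; case: b => [?|[??]]. Qed.

Definition hemb n (j : 'I_4) (u : Gvert n.+1) : Ghvert n.+2 := Some (emb j u).

Lemma par_Some (V : Type) (x y : V) j : par (Some x) (Some y) j = Some (par x y j).
Proof. by rewrite /par; case: ifP. Qed.

Lemma emb_notroot n (j : 'I_4) (u : Gvert n.+1) : Ghadj (Some (emb j u)) None = false.
Proof.
case: u => [i|[k t]] //=.
by have := F_ge3 j i; case: (F j i) => [|//].
Qed.

Lemma DH n : Decomp (Gadj (n := n.+1)) (Ghadj (n := n.+2)) (rootv n) (@hemb n)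
  (Some (rootv n.+1)) (Some (xv n)) (Some (yv n)).
Proof.
have D := DG n.
split.
- exact: Ghadj_sym.
- exact: Gadj_sym.
- move=> j j' u u'; rewrite /hemb => -[] E; exact: (d_disj D E).
- move=> j u w H; rewrite /hemb Ghadj_SS; exact: (d_up D j H).
- move=> j u [w|]; rewrite /hemb; last by rewrite emb_notroot.
  rewrite Ghadj_SS => /(d_nbr D) [[w' [-> e']]|[-> ->]].
    by left; exists w'.
  by right; rewrite par_Some.
- by move=> j; rewrite par_Some /hemb Ghadj_SS; exact: (d_epar D).
- by move=> j u; have [h1 [h2 h3]] := d_top D j u; rewrite /hemb; split; [|split] => -[].
- by move=> H; apply: (d_rx D); case: H.
- by move=> H; apply: (d_ry D); case: H.
- by rewrite Ghadj_SS; exact: (d_exr D).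
- by rewrite Ghadj_SS; exact: (d_eyr D).
- move=> [w|] //; rewrite Ghadj_SS; move/(d_nx D) => [->|[->|->]]; auto.
- move=> [w|] //; rewrite Ghadj_SS; move/(d_ny D) => [->|[->|->]]; auto.
Qed.

Lemma cover_H n (v : Ghvert n.+2) :
  [\/ v = Some (rootv n.+1), v = Some (xv n), v = Some (yv n) |
      v = None \/ exists j u, v = hemb j u].
Proof.
case: v => [v|]; last by apply: Or44; left.
case: (cover_G v) => [->|->|->|[j [u ->]]].
- exact: Or41.
- exact: Or42.
- exact: Or43.
- by apply: Or44; right; exists j, u.
Qed.

Lemma nr_H n (w : Ghvert n.+2) : Ghadj (Some (rootv n.+1)) w ->
  [\/ w = Some (xv n), w = Some (yv n) | w = None].
Proof.
case: w => [[m|[k t]]|] //=; last by move=> _; apply: Or33.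
- rewrite /tree_child /= => h.
  have : (m : nat) = 1 \/ (m : nat) = 2.
    move: h; case: (m : nat) => [|[|[|mm]]] //; auto.
  case=> E; [apply: Or31|apply: Or32]; congr Some; apply/eqP;
    by rewrite /xv /yv inl_eqE -val_eqE /= E.
- by case/andP => /eqP E _; have := leaf2_big n k; rewrite -E.
Qed.

Lemma eNS_H n (b : Gvert n.+1) : Ghadj None (Some b) = (b == rootv n).
Proof. by case: b => [i|[k t]] //=; rewrite /rootv inl_eqE -val_eqE. Qed.
Lemma eSN_H n (a : Gvert n.+1) : Ghadj (Some a) None = (a == rootv n).
Proof. by case: a => [i|[k t]] //=; rewrite /rootv inl_eqE -val_eqE. Qed.

Definition closedL (T : eqType) (e : rel T) (L : seq T) (C : pred T) :=
  all (fun v => all (fun u =>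
     ~~ [&& C v, e v u & all (fun w => (e v w && (w != u)) ==> C w) L] || C u) L) L.

Lemma closedL_black (T : finType) (e : rel T) (L : seq T) (C : pred T) (S : {set T}) :
  (forall v, v \in L) -> closedL e L C -> (forall s, s \in S -> C s) ->
  forall x, black e S x -> C x.
Proof.
move=> HL cl HS; apply: closed_black => // v u Cv evu Cw.
move/allP: cl => /(_ v (HL v)) /allP /(_ u (HL u)).
rewrite Cv evu /=.
have -> : all (fun w => e v w && (w != u) ==> C w) L.
  by apply/allP => w _; apply/implyP => /andP [a b]; apply: Cw.
by [].
Qed.

Lemma force_by (T : finType) (e : rel T) (S : {set T}) (L K : seq T) (v u : T) :
  (forall w, w \in L) -> black e S v -> e v u -> (forall w, w \in K -> black e S w) ->
  all (fun w => (e v w && (w != u)) ==> (w \in K)) L -> black e S u.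
Proof.
move=> HL bv evu HK /allP H.
apply: (black_force (v := v)) => // w ew nw.
apply: HK; have := H w (HL w); by rewrite ew nw.
Qed.

Lemma base_lower (T : finType) (e : rel T) (L : seq T) (a b c d : T) :
  (forall v, v \in L) ->
  a != b -> c != d -> a != c -> a != d -> b != c -> b != d ->
  closedL e L (fun w => (w != a) && (w != b)) ->
  closedL e L (fun w => (w != c) && (w != d)) ->
  all (fun p => all (fun q => closedL e L (fun w => (w == p) || (w == q))) [:: c; d]) [:: a; b] ->
  forall S, zero_forcing e S -> 3 <= #|S|.
Proof.
move=> HL ab cd ac ad bc bd c1 c2 c3 S zS.
have [p pS pab] : exists2 p, p \in S & p \in [:: a; b].
  apply: NNPP => ne.
  suff : (a != a) && (a != b) by rewrite eqxx.
  apply: (closedL_black HL c1 _ (zS a)) => s sS.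
  case: (boolP (_ && _)) => // h; exfalso; apply: ne; exists s => //.
  by move: h; rewrite negb_and !negbK !inE => /orP [] ->; rewrite ?orbT.
have [q qS qcd] : exists2 q, q \in S & q \in [:: c; d].
  apply: NNPP => ne.
  suff : (c != c) && (c != d) by rewrite eqxx.
  apply: (closedL_black HL c2 _ (zS c)) => s sS.
  case: (boolP (_ && _)) => // h; exfalso; apply: ne; exists s => //.
  by move: h; rewrite negb_and !negbK !inE => /orP [] ->; rewrite ?orbT.
have pq : p != q.
  move: pab qcd; rewrite !inE => /orP [] /eqP -> /orP [] /eqP ->; by rewrite ?ab ?ac ?ad ?bc ?bd.
rewrite leqNgt; apply/negP => S2.
have sub : [set p; q] \subset S by apply/subsetP => z; rewrite !inE => /orP [] /eqP ->.
have SE : S = [set p; q].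
  by apply/eqP; rewrite eq_sym eqEcard sub cards2 pq /= -ltnS.
have cl : closedL e L (fun w => (w == p) || (w == q)).
  by move/allP: c3 => /(_ p pab) /allP /(_ q qcd).
have allin := closedL_black HL cl (S := S).
have Hs : forall s, s \in S -> (s == p) || (s == q) by move=> s; rewrite SE !inE.
move: pab qcd; rewrite !inE => /orP [] /eqP pE /orP [] /eqP qE; subst p q.
- by have := allin Hs b (zS b); rewrite eq_sym (negbTE ab) (negbTE bc).
- by have := allin Hs b (zS b); rewrite eq_sym (negbTE ab) (negbTE bd).
- by have := allin Hs a (zS a); rewrite (negbTE ab) (negbTE ac).
- by have := allin Hs a (zS a); rewrite (negbTE ab) (negbTE ad).
Qed.

Definition s1 : Gvert 1 := inl (Ordinal (isT : 0 < 2 ^ (2 * 1 - 1) - 1)).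
Definition g1 (t : 'I_4) : Gvert 1 := inr (Ordinal (isT : 0 < 2 ^ (2 * 1 - 2)), t).
Definition L1 : seq (Gvert 1) := [:: s1; g1 o0; g1 o1; g1 o2; g1 o3].

Lemma L1_all v : v \in L1.
Proof.
case: v => [i|[k t]].
- have -> : i = Ordinal (isT : 0 < 2 ^ (2 * 1 - 1) - 1).
    by apply: val_inj; case: i => [[|?] ?].
  by rewrite in_cons eqxx.
- have -> : k = Ordinal (isT : 0 < 2 ^ (2 * 1 - 2)).
    by apply: val_inj; case: k => [[|?] ?].
  rewrite /L1 /g1 !in_cons.
  by case: (ord4_cases t) => [->|[->|[->|->]]]; rewrite ?eqxx ?orbT.
Qed.

Lemma base_lowerG S : zero_forcing (Gadj (n := 1)) S -> 3 <= #|S|.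
Proof.
apply: (@base_lower _ _ L1 (g1 o0) (g1 o1) (g1 o2) (g1 o3)) => //.
all: try exact: L1_all; by vm_compute.
Qed.

Definition Lh : seq (Ghvert 1) := None :: map Some L1.
Lemma Lh_all v : v \in Lh.
Proof.
case: v => [v|]; last by rewrite in_cons eqxx.
by rewrite /Lh in_cons; apply/orP; right; apply: map_f; exact: L1_all.
Qed.

Lemma base_lowerH S : zero_forcing (Ghadj (n := 1)) S -> 3 <= #|S|.
Proof.
apply: (@base_lower _ _ Lh (Some (g1 o0)) (Some (g1 o1)) (Some (g1 o2)) (Some (g1 o3))) => //.
all: try exact: Lh_all; by vm_compute.
Qed.

Lemma card3 (T : finType) (x y z : T) : #|[set x; y; z]| <= 3.
Proof.
apply: (leq_trans (cardU_le [set x; y] [set z])).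
by rewrite cards1 cards2; case: (x != y).
Qed.

Lemma rootv0 : rootv 0 = s1.
Proof. by rewrite /rootv /s1; congr inl; apply: val_inj. Qed.

Lemma base_R : exists R, [/\ zero_forcing (Gadj (n := 1)) R, rootv 0 \in R & #|R| <= 3].
Proof.
exists [set s1; g1 o0; g1 o2]; split; last exact: card3.
- have bs : black (Gadj (n := 1)) [set s1; g1 o0; g1 o2] s1 by apply: black_init; rewrite !inE eqxx.
  have ba : black (Gadj (n := 1)) [set s1; g1 o0; g1 o2] (g1 o0) by apply: black_init; rewrite !inE eqxx ?orbT.
  have bc : black (Gadj (n := 1)) [set s1; g1 o0; g1 o2] (g1 o2) by apply: black_init; rewrite !inE eqxx ?orbT.
  have be : black (Gadj (n := 1)) [set s1; g1 o0; g1 o2] (g1 o3).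
    apply: (@force_by _ _ _ L1 [:: s1; g1 o0; g1 o2] (g1 o0)) => //; first exact: L1_all.
    move=> w; rewrite !in_cons in_nil orbF => /orP [/eqP ->|/orP [] /eqP ->].
    + exact: bs.
    + exact: ba.
    + exact: bc.
  have bb : black (Gadj (n := 1)) [set s1; g1 o0; g1 o2] (g1 o1).
    apply: (@force_by _ _ _ L1 [:: g1 o0; g1 o2; g1 o3] (g1 o2)) => //; first exact: L1_all.
    move=> w; rewrite !in_cons in_nil orbF => /orP [/eqP ->|/orP [] /eqP ->].
    + exact: ba.
    + exact: bc.
    + exact: be.
  move=> v; have := L1_all v; rewrite !in_cons in_nil orbF.
  case/orP => [/eqP ->|/orP [/eqP ->|/orP [/eqP ->|/orP [] /eqP ->]]].
  + exact: bs.
  + exact: ba.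
  + exact: bb.
  + exact: bc.
  + exact: be.
- by rewrite rootv0 !inE eqxx.
Qed.

Lemma base_H : exists H, [/\ zero_forcing (Ghadj (n := 1)) H, None \notin H & #|H| <= 3].
Proof.
pose H : {set Ghvert 1} := [set Some (g1 o0); Some (g1 o2); Some (g1 o3)].
exists H; split; last exact: card3.
- have ba : black (Ghadj (n := 1)) H (Some (g1 o0)) by apply: black_init; rewrite !inE eqxx.
  have bc : black (Ghadj (n := 1)) H (Some (g1 o2)) by apply: black_init; rewrite !inE eqxx ?orbT.
  have be : black (Ghadj (n := 1)) H (Some (g1 o3)) by apply: black_init; rewrite !inE eqxx ?orbT.
  have bs : black (Ghadj (n := 1)) H (Some s1).
    apply: (@force_by _ _ _ Lh [:: Some (g1 o0); Some (g1 o2); Some (g1 o3)] (Some (g1 o0))) => //;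
      first exact: Lh_all.
    move=> w; rewrite !in_cons in_nil orbF => /orP [/eqP ->|/orP [] /eqP ->].
    + exact: ba.
    + exact: bc.
    + exact: be.
  have bb : black (Ghadj (n := 1)) H (Some (g1 o1)).
    apply: (@force_by _ _ _ Lh [:: Some (g1 o0); Some (g1 o2); Some (g1 o3)] (Some (g1 o2))) => //;
      first exact: Lh_all.
    move=> w; rewrite !in_cons in_nil orbF => /orP [/eqP ->|/orP [] /eqP ->].
    + exact: ba.
    + exact: bc.
    + exact: be.
  have bn : black (Ghadj (n := 1)) H None.
    apply: (@force_by _ _ _ Lh [:: Some (g1 o0); Some (g1 o1)] (Some s1)) => //; first exact: Lh_all.
    move=> w; rewrite !in_cons in_nil orbF => /orP [] /eqP ->.
    + exact: ba.
    + exact: bb.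
  move=> v; have := Lh_all v; rewrite /Lh /L1 /= !in_cons in_nil orbF.
  case/orP => [/eqP ->|/orP [/eqP ->|/orP [/eqP ->|/orP [/eqP ->|/orP [/eqP ->| /eqP ->]]]]].
  + exact: bn.
  + exact: bs.
  + exact: ba.
  + exact: bb.
  + exact: bc.
  + exact: be.
- by rewrite !inE.
Qed.

Definition Q n :=
  [/\ (forall S, zero_forcing (Gadj (n := n.+1)) S -> (t n.+1).+1 <= #|S|),
      (forall S, zero_forcing (Ghadj (n := n.+1)) S -> (t n.+1).+1 <= #|S|),
      (exists R, [/\ zero_forcing (Gadj (n := n.+1)) R, rootv n \in R & #|R| <= (t n.+1).+1]) &
      (exists H, [/\ zero_forcing (Ghadj (n := n.+1)) H, None \notin H & #|H| <= (t n.+1).+1])].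

Lemma Q0 : Q 0.
Proof. split; [exact: base_lowerG | exact: base_lowerH | exact: base_R | exact: base_H]. Qed.

Lemma QS n : Q n -> Q n.+1.
Proof.
case=> lowG lowH [R [zR rR cR]] [H [zH NH cH]].
have tE : t n.+2 = 4 * t n.+1 + 2 by [].
set k := t n.+1 in lowG lowH cR cH tE.
rewrite /Q tE; split.
- move=> S zS; have := lower_dec (DG n) lowG zS; lia.
- move=> S zS; have := lower_dec (DH n) lowG zS; lia.
- have [zS cS rS] := upper_G (DG n) (@cover_G n) (@Ghadj_SS n.+1) (@eNS_H n) (@eSN_H n)
     (erefl false) zR rR zH NH.
  exists (S1 (@emb n) (rootv n.+1) (rootv n) R H); split => //.
  move: cS cR cH; set a := #|S1 _ _ _ _ _|; set b := #|R|; set c := #|H|; lia.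
- have zn : forall j u, hemb (n := n) j u <> None by [].
  have [zS cS nS] := upper_H (DH n) (@cover_H n) (@nr_H n) (erefl true) zn
     (@Ghadj_SS n.+1) (@eNS_H n) (@eSN_H n) (erefl false) zR rR zH NH.
  exists (S2 (@hemb n) (rootv n) R H); split => //.
  move: cS cR cH; set a := #|S2 _ _ _ _|; set b := #|R|; set c := #|H|; lia.
Qed.


Theorem proposition1 (n : nat) :
  1 <= n -> is_Z (@Gadj n) (t n).+1 /\ is_Z (@Ghadj n) (t n).+1.
Proof.
case: n => [//|m] _.
have : Q m by elim: m => [|m IH]; [exact: Q0 | exact: QS].
case=> lowG lowH [R [zR _ cR]] [H [zH _ cH]].
split; split.
- by exists R; split => //; apply/eqP; rewrite eqn_leq cR lowG.
- exact: lowG.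
- by exists H; split => //; apply/eqP; rewrite eqn_leq cH lowH.
- exact: lowH.
Qed.
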